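(* Let $d\ge 2$, let $B^d$ be the closed unit ball in $\mathbb{E}^d$ centred at the origin with boundary sphere $\mathbb{S}^{d-1}$, and let $K_c=\operatorname{conv}\big(\mathbb{S}^{d-1}\cup\{\boldsymbol v_i\mid i\in I\}\big)$ be a cap body, i.e. $\{\boldsymbol v_i\mid i\in I\}$ is a countable set of points of $\mathbb{E}^d\setminus B^d$ such that for any two distinct $i,j\in I$ the segment $\overline{\boldsymbol v_i\boldsymbol v_j}$ intersects $B^d$. Let $\boldsymbol u_1,\dots,\boldsymbol u_k\in\mathbb{S}^{d-1}$. Then $K_c$ is completely illuminated by the directions $\boldsymbol u_1,\dots,\boldsymbol u_k$ if and only if both of the following hold: (i) for every $i\in I$ the closed spherical cap $C_i=\{\boldsymbol x\in\mathbb{S}^{d-1}\mid \langle \boldsymbol x,\boldsymbol v_i\rangle\ge 1\}$ is contained in the open hemisphere $\operatorname{Hem}_{-\boldsymbol u_j}$ for some $j\in\{1,\dots,k\}$; and (ii) $\bigcup_{j=1}^k \operatorname{Hem}_{-\boldsymbol u_j}=\mathbb{S}^{d-1}$.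
   Context: For a unit vector $\boldsymbol u$, $\operatorname{Hem}_{\boldsymbol u}=\{\boldsymbol x\in\mathbb{S}^{d-1}\mid\langle\boldsymbol x,\boldsymbol u\rangle>0\}$ is the open hemisphere centred at $\boldsymbol u$. For a convex body $K$ (compact convex set with nonempty interior), a direction $\boldsymbol u\in\mathbb{S}^{d-1}$ illuminates a boundary point $\boldsymbol p$ of $K$ if there is $\lambda>0$ with $\boldsymbol p+\lambda\boldsymbol u$ in the interior of $K$; $K$ is completely illuminated by a set of directions if every boundary point of $K$ is illuminated by at least one of them. *)

(* Defs.v *)
(* E^d is modelled as row vectors 'rV[R]_d over R : realType,
   with its canonical (normed) topology, which is the Euclidean topology. *)
From HB Require Import structures.
From mathcomp Require Import all_boot all_order all_algebra.
From mathcomp Require Import all_classical all_reals all_analysis.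
Set Implicit Arguments. Unset Strict Implicit. Unset Printing Implicit Defensive.
Import Order.TTheory GRing.Theory Num.Theory.
Import numFieldNormedType.Exports.
Local Open Scope classical_set_scope.
Local Open Scope ring_scope.

Section Defs.
Variables (R : realType) (d : nat).
Notation vec := 'rV[R]_d.

Definition dotv (x y : vec) : R := \sum_(i < d) x ord0 i * y ord0 i.

Definition ball1 : set vec := [set x | dotv x x <= 1].
Definition sphere1 : set vec := [set x | dotv x x = 1].

Definition Hem (u : vec) : set vec := [set x | sphere1 x /\ 0 < dotv x u].

Definition cap (v : vec) : set vec := [set x | sphere1 x /\ 1 <= dotv x v].

Definition segment (a b : vec) : set vec :=
  [set (1 - t) *: a + t *: b | t in `[0, 1]%classic].

Definition conv (A : set vec) : set vec :=
  [set x | exists n (w : 'I_n -> R) (p : 'I_n -> vec),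
     (forall i, 0 <= w i) /\ \sum_(i < n) w i = 1 /\
     (forall i, A (p i)) /\ x = \sum_(i < n) w i *: p i].

Definition cap_body_points (V : set vec) : Prop :=
  countable V /\ V `<=` ~` ball1 /\
  (forall v w, V v -> V w -> v <> w -> segment v w `&` ball1 !=set0).

Definition cap_body (V : set vec) : set vec := conv (sphere1 `|` V).

Definition bdry (K : set vec) : set vec := closure K `\` interior K.

Definition illuminates (K : set vec) (u p : vec) : Prop :=
  exists2 lam : R, 0 < lam & interior K (p + lam *: u).

Definition completely_illuminated (K : set vec) (k : nat) (u : 'I_k -> vec) : Prop :=
  forall p, bdry K p -> exists j, illuminates K (u j) p.
End Defs.

(* Main.v *)
Require Import Defs.
From HB Require Import structures.
From mathcomp Require Import all_boot all_order all_algebra.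
From mathcomp Require Import all_classical all_reals all_analysis.
From mathcomp Require Import ring lra finmap.
Import Order.TTheory GRing.Theory Num.Theory.
Import numFieldNormedType.Exports.
Local Open Scope classical_set_scope.
Local Open Scope ring_scope.
Set Implicit Arguments. Unset Strict Implicit. Unset Printing Implicit Defensive.
Section Dot.
Variables (R : realType) (d : nat).
Notation vec := 'rV[R]_d.
Implicit Types x y z : vec.

Lemma dotvC x y : dotv x y = dotv y x.
Proof. by apply: eq_bigr => i _; rewrite mulrC. Qed.

Lemma dotvDl x y z : dotv (x + y) z = dotv x z + dotv y z.
Proof. by rewrite /dotv -big_split; apply: eq_bigr => i _; rewrite mxE mulrDl. Qed.

Lemma dotvZl (a : R) x z : dotv (a *: x) z = a * dotv x z.
Proof. by rewrite /dotv mulr_sumr; apply: eq_bigr => i _; rewrite mxE mulrA. Qed.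

Lemma dotvNl x z : dotv (- x) z = - dotv x z.
Proof. by rewrite -scaleN1r dotvZl mulN1r. Qed.

Lemma dotvBl x y z : dotv (x - y) z = dotv x z - dotv y z.
Proof. by rewrite dotvDl dotvNl. Qed.

Lemma dotv0l z : dotv 0 z = 0.
Proof. by rewrite /dotv big1 // => i _; rewrite mxE mul0r. Qed.

Lemma dotvDr x y z : dotv z (x + y) = dotv z x + dotv z y.
Proof. by rewrite dotvC dotvDl !(dotvC z). Qed.

Lemma dotvZr (a : R) x z : dotv z (a *: x) = a * dotv z x.
Proof. by rewrite dotvC dotvZl dotvC. Qed.

Lemma dotvNr x z : dotv z (- x) = - dotv z x.
Proof. by rewrite dotvC dotvNl dotvC. Qed.

Lemma dotvBr x y z : dotv z (x - y) = dotv z x - dotv z y.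
Proof. by rewrite dotvDr dotvNr. Qed.

Lemma dotv0r z : dotv z 0 = 0.
Proof. by rewrite dotvC dotv0l. Qed.

Lemma dotv_ge0 x : 0 <= dotv x x.
Proof. by apply: sumr_ge0 => i _; rewrite -expr2 sqr_ge0. Qed.

Lemma dotv_suml (I : Type) (r : seq I) (P : pred I) (F : I -> vec) z :
  dotv (\sum_(i <- r | P i) F i) z = \sum_(i <- r | P i) dotv (F i) z.
Proof.
elim/big_rec2: _ => [|i a b _ <-]; first exact: dotv0l.
by rewrite dotvDl.
Qed.

Lemma coord_sq_le x i : x ord0 i ^+ 2 <= dotv x x.
Proof.
rewrite /dotv (bigD1 i) //= -expr2 lerDl.
by apply: sumr_ge0 => j _; rewrite -expr2 sqr_ge0.
Qed.

Lemma CS x y : dotv x y ^+ 2 <= dotv x x * dotv y y.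
Proof.
set X := dotv x x; set Y := dotv y y; set P := dotv x y.
have hX : 0 <= X := dotv_ge0 x. have hY : 0 <= Y := dotv_ge0 y.
have h1 := dotv_ge0 (X *: y - P *: x).
rewrite !(dotvBl, dotvBr, dotvZl, dotvZr) -/X -/Y -/P (dotvC y x) -/P in h1.
have h2 := dotv_ge0 (Y *: x - P *: y).
rewrite !(dotvBl, dotvBr, dotvZl, dotvZr) -/X -/Y -/P (dotvC y x) -/P in h2.
have h3 := dotv_ge0 (x + y).
rewrite !(dotvDl, dotvDr) -/X -/Y -/P (dotvC y x) -/P in h3.
have h4 := dotv_ge0 (x - y).
rewrite !(dotvBl, dotvBr) -/X -/Y -/P (dotvC y x) -/P in h4.
have [X0|X0] := eqVneq X 0.
  have [Y0|Y0] := eqVneq Y 0.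
    rewrite X0 Y0 in h3 h4 *. nra.
  have Yp : 0 < Y by rewrite lt_def Y0.
  nra.
have Xp : 0 < X by rewrite lt_def X0.
nra.
Qed.

End Dot.
Section En.
Variables (R : realType) (d : nat).
Notation vec := 'rV[R]_d.
Implicit Types x y z : vec.

Definition en x : R := Num.sqrt (dotv x x).

Lemma en_ge0 x : 0 <= en x. Proof. exact: sqrtr_ge0. Qed.
Lemma en_sq x : en x ^+ 2 = dotv x x. Proof. by rewrite sqr_sqrtr // dotv_ge0. Qed.

Lemma sq_le (a b : R) : 0 <= a -> 0 <= b -> a ^+ 2 <= b ^+ 2 -> a <= b.
Proof. move=> ha hb h; nra. Qed.
Lemma sq_lt (a b : R) : 0 <= a -> 0 <= b -> a ^+ 2 < b ^+ 2 -> a < b.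
Proof. move=> ha hb h; nra. Qed.

Lemma dot_le_en x y : dotv x y <= en x * en y.
Proof.
have h := CS x y; rewrite -!en_sq in h.
have [hp|hn] := lerP (dotv x y) 0.
  by apply: le_trans hp _; apply: mulr_ge0; apply: en_ge0.
apply: sq_le; first exact: ltW.
  by apply: mulr_ge0; apply: en_ge0.
by rewrite exprMn.
Qed.

Lemma en_triangle x y : en (x + y) <= en x + en y.
Proof.
apply: sq_le; [exact: en_ge0| by apply: addr_ge0; apply: en_ge0|].
rewrite en_sq !(dotvDl, dotvDr) (dotvC y x).
have h := dot_le_en x y. rewrite -!en_sq in h *. nra.
Qed.

Lemma enZ (a : R) x : en (a *: x) = `|a| * en x.
Proof.
by rewrite /en dotvZl dotvZr mulrA -expr2 sqrtrM ?sqr_ge0 // sqrtr_sqr.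
Qed.

Lemma enN x : en (- x) = en x.
Proof. by rewrite /en dotvNl dotvNr opprK. Qed.

Lemma en_sym x y : en (x - y) = en (y - x).
Proof. by rewrite -enN opprB. Qed.

Lemma coord_le_norm x i : `|x ord0 i| <= `|x|.
Proof.
rewrite [X in _ <= X]/Num.norm /= mx_normrE.
exact: (le_bigmax _ (fun ij : 'I_1 * 'I_d => `|x ij.1 ij.2|) (ord0, i)).
Qed.

Lemma norm_le_en x : `|x| <= en x.
Proof.
rewrite [X in X <= _]/Num.norm /= mx_normrE.
apply/bigmax_leP; split; first exact: en_ge0.
move=> [i j] _ /=. rewrite (ord1 i).
apply: sq_le; [exact: normr_ge0|exact: en_ge0|].
by rewrite en_sq real_normK ?num_real // coord_sq_le.
Qed.

Lemma dot_le_norm x : dotv x x <= d%:R * `|x| ^+ 2.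
Proof.
have -> : d%:R * `|x| ^+ 2 = \sum_(i < d) `|x| ^+ 2.
  by rewrite sumr_const card_ord mulr_natl.
apply: ler_sum => i _.
rewrite -expr2 -real_normK ?num_real //.
by apply: lerXn2r; rewrite ?nnegrE ?normr_ge0 // coord_le_norm.
Qed.

Lemma nbhs_en (p : vec) (e : R) : 0 < e -> nbhs p [set y | en (y - p) < e].
Proof.
move=> e0; apply/nbhs_ballP.
have d0 : 0 <= d%:R :> R by [].
exists (e / (d%:R + 1)); first by apply: divr_gt0 => //; lra.
move=> y; rewrite -ball_normE /ball_ /= => hy.
apply: sq_lt; [exact: en_ge0|exact: ltW|].
rewrite en_sq; apply: (le_lt_trans (dot_le_norm _)).
rewrite -normrN opprB in hy.
have hn := normr_ge0 (y - p).
set r := e / (d%:R + 1) in hy.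
have hr : r * (d%:R + 1) = e by rewrite /r mulfVK //; lra.
rewrite -hr.
have : `|y - p| ^+ 2 < r ^+ 2 by apply: ltrXn2r.
nra.
Qed.

Lemma interior_en (A : set vec) p :
  (exists2 e, 0 < e & forall y, en (y - p) < e -> A y) -> interior A p.
Proof. by move=> [e e0 he]; apply: filterS (nbhs_en p e0) => y /he. Qed.

Lemma interior_en_inv (A : set vec) p : interior A p ->
  exists2 e, 0 < e & forall y, en (y - p) < e -> A y.
Proof.
move=> /nbhs_ballP [r r0 hr]; exists r => // y hy; apply: hr.
rewrite -ball_normE /ball_ /=.
by apply: le_lt_trans (norm_le_en _) _; rewrite en_sym.
Qed.

Lemma closure_en (A : set vec) p : closure A p ->
  forall e, 0 < e -> exists y, A y /\ en (y - p) < e.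
Proof.
move=> hc e e0; have [y [Ay hy]] := hc _ (nbhs_en p e0).
by exists y.
Qed.

End En.
Ltac veq := apply/rowP => ?; rewrite !mxE.

Section Geo.
Variables (R : realType) (d : nat).
Notation vec := 'rV[R]_d.
Implicit Types x y z b : vec.

Definition Cv (v y : vec) : Prop := exists b t,
  dotv b b <= 1 /\ 0 <= t <= 1 /\ y = (1 - t) *: b + t *: v.

Definition Sset (V : set vec) (y : vec) : Prop :=
  ball1 y \/ exists2 v, V v & Cv v y.

Lemma ball_convex b1 b2 (t : R) : dotv b1 b1 <= 1 -> dotv b2 b2 <= 1 ->
  0 <= t <= 1 -> dotv ((1 - t) *: b1 + t *: b2) ((1 - t) *: b1 + t *: b2) <= 1.
Proof.
move=> h1 h2 /andP[t0 t1].
rewrite !(dotvDl, dotvDr, dotvZl, dotvZr) (dotvC b2 b1).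
have h := dotv_ge0 (b1 - b2).
rewrite !(dotvBl, dotvBr) (dotvC b2 b1) in h.
have hP : dotv b1 b2 <= 1 by lra.
have e1 : (1 - t) * (1 - t) * dotv b1 b1 <= (1 - t) * (1 - t) by apply: ler_piMr => //; nra.
have e2 : t * (1 - t) * dotv b1 b2 <= t * (1 - t) by apply: ler_piMr => //; nra.
have e3 : t * t * dotv b2 b2 <= t * t by apply: ler_piMr => //; nra.
nra.
Qed.

Lemma mixB b1 b2 (a c : R) : dotv b1 b1 <= 1 -> dotv b2 b2 <= 1 ->
  0 <= a -> 0 <= c -> exists b, dotv b b <= 1 /\ a *: b1 + c *: b2 = (a + c) *: b.
Proof.
move=> h1 h2 a0 c0.
have [e0|ne0] := eqVneq (a + c) 0.
  have a00 : a = 0 by lra.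
  have c00 : c = 0 by lra.
  exists 0; split; first by rewrite dotv0l.
  by rewrite a00 c00 !scale0r scaler0 addr0.
have s0 : 0 < a + c by rewrite lt_def ne0 /=; lra.
exists ((1 - c / (a + c)) *: b1 + (c / (a + c)) *: b2); split.
  apply: ball_convex => //; apply/andP; split.
    by apply: divr_ge0 => //; apply: ltW.
  by rewrite ler_pdivrMr // mul1r; lra.
veq. field. by rewrite ne0.
Qed.

Lemma mkC v b (a c : R) : dotv b b <= 1 -> 0 <= a -> 0 <= c -> a + c = 1 ->
  Cv v (a *: b + c *: v).
Proof.
move=> hb a0 c0 ac; exists b, c; split => //; split; first by apply/andP; split; lra.
by have -> : a = 1 - c by lra.
Qed.

Lemma seg_dec (V : set vec) : cap_body_points V -> forall v w, V v -> V w -> v <> w ->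
  exists tau b0, 0 < tau < 1 /\ dotv b0 b0 <= 1 /\ b0 = (1 - tau) *: v + tau *: w.
Proof.
move=> [_ [hout hseg]] v w Vv Vw vw.
have [b0 [[tau htau <-] hb0]] := hseg v w Vv Vw vw.
move: htau; rewrite /= in_itv /= => /andP[t0 t1].
have hv := hout v Vv; have hw := hout w Vw.
rewrite /ball1 /= in hv hw hb0.
exists tau, ((1 - tau) *: v + tau *: w); split => //.
apply/andP; split.
  rewrite lt_def t0 andbT; apply/eqP => t00.
  by apply: hv; move: hb0; rewrite t00 subr0 scale1r scale0r addr0.
rewrite lt_def t1 andbT; apply/eqP => t00.
by apply: hw; move: hb0; rewrite -t00 subrr scale1r scale0r add0r.
Qed.

Lemma Sclosed (V : set vec) : cap_body_points V -> forall q g (t : R),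
  Sset V q -> (sphere1 g \/ V g) -> 0 <= t <= 1 -> Sset V ((1 - t) *: q + t *: g).
Proof.
move=> hV q g t hq hg ht; rewrite /Sset /ball1 /=.
have /andP[t0 t1] := ht.
case: hq => [hq|[v Vv [b [s [hb [hs ->]]]]]].
  case: hg => [hg|Vg].
    by left; apply: ball_convex => //; rewrite /sphere1 /= in hg; rewrite hg.
  by right; exists g => //; exists q, t.
have /andP[s0 s1] := hs.
case: hg => [hg|Vg].
  have hg' : dotv g g <= 1 by rewrite /sphere1 /= in hg; rewrite hg.
  have hh : 0 <= (1 - t) * (1 - s) by nra.
  have [b' [hb' eb']] := mixB hb hg' hh t0.
  right; exists v => //.
  have -> : (1 - t) *: ((1 - s) *: b + s *: v) + t *: g =
    ((1 - t) * (1 - s) + t) *: b' + ((1 - t) * s) *: v.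
    rewrite -eb'; veq; ring.
  apply: mkC => //; [|nra|ring].
  by apply: addr_ge0 => //; nra.
have [->|vg] := eqVneq g v.
  right; exists v => //.
  have -> : (1 - t) *: ((1 - s) *: b + s *: v) + t *: v =
    ((1 - t) * (1 - s)) *: b + ((1 - t) * s + t) *: v by veq; ring.
  apply: mkC => //; [nra|nra|ring].
have [tau [b0 [htau [hb0 eb0]]]] := seg_dec hV Vv Vg (nesym (elimN eqP vg)).
have /andP[tau0 tau1] := htau.
set al := (1 - t) * (1 - s); set be := (1 - t) * s.
have al0 : 0 <= al by rewrite /al; nra.
have be0 : 0 <= be by rewrite /be; nra.
have [hc|hc] := lerP (t * (1 - tau)) (be * tau).
  have c0 : 0 <= t / tau by apply: divr_ge0 => //; lra.
  have [b' [hb' eb']] := mixB hb hb0 al0 c0.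
  right; exists v => //.
  have -> : (1 - t) *: ((1 - s) *: b + s *: v) + t *: g =
    (al + t / tau) *: b' + (be - t * (1 - tau) / tau) *: v.
    rewrite -eb' eb0; veq; rewrite /al /be; field; lra.
  apply: mkC => //.
  - by apply: addr_ge0.
  - rewrite subr_ge0 ler_pdivrMr //; lra.
  - rewrite /al /be; field; lra.
have c0 : 0 <= be / (1 - tau) by apply: divr_ge0 => //; lra.
have [b' [hb' eb']] := mixB hb hb0 al0 c0.
right; exists g => //.
have -> : (1 - t) *: ((1 - s) *: b + s *: v) + t *: g =
  (al + be / (1 - tau)) *: b' + (t - be * tau / (1 - tau)) *: g.
  rewrite -eb' eb0; veq; rewrite /al /be; field; lra.
apply: mkC => //.
- by apply: addr_ge0.
- rewrite subr_ge0 ler_pdivrMr; lra.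
- rewrite /al /be; field; lra.
Qed.

Lemma combo (V : set vec) : cap_body_points V -> forall n (w : 'I_n -> R) (p : 'I_n -> vec),
  (forall i, 0 <= w i) -> (forall i, (@sphere1 R d `|` V) (p i)) ->
  exists y, Sset V y /\ \sum_(i < n) w i *: p i = (\sum_(i < n) w i) *: y.
Proof.
move=> hV; elim => [|n IH] w p hw hp.
  exists 0; split; first by left; rewrite /ball1 /= dotv0l.
  by rewrite !big_ord0 scale0r.
have [y [Sy ey]] := IH (fun i => w (widen_ord (leqnSn n) i))
   (fun i => p (widen_ord (leqnSn n) i)) (fun i => hw _) (fun i => hp _).
rewrite !big_ord_recr /= ey.
set s := \sum_(i < n) _.
have s0 : 0 <= s by apply: sumr_ge0 => i _.
have a0 := hw ord_max.
have [e0|ne0] := eqVneq (s + w ord_max) 0.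
  have s00 : s = 0 by lra.
  have a00 : w ord_max = 0 by lra.
  by exists y; split => //; rewrite s00 a00 !scale0r addr0 add0r scale0r.
have sp : 0 < s + w ord_max by rewrite lt_def ne0 /=; lra.
set t := w ord_max / (s + w ord_max).
have ht : 0 <= t <= 1.
  apply/andP; split; first by apply: divr_ge0 => //; apply: ltW.
  by rewrite ler_pdivrMr // mul1r; lra.
exists ((1 - t) *: y + t *: p ord_max); split.
  apply: Sclosed => //; case: (hp ord_max) => h; by [left|right].
veq; rewrite /t; field; by rewrite ne0.
Qed.

Lemma conv_sub (V : set vec) : cap_body_points V -> cap_body V `<=` Sset V.
Proof.
move=> hV x [n [w [p [hw [hs [hp ->]]]]]].
have [y [Sy ey]] := combo hV hw hp.
by rewrite ey hs scale1r.
Qed.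

End Geo.
Section Kmem.
Variables (R : realType) (d : nat) (i0 : 'I_d).
Notation vec := 'rV[R]_d.
Implicit Types x y z b g : vec.

Definition e0 : vec := \row_j (j == i0)%:R.

Lemma e0_unit : dotv e0 e0 = 1.
Proof.
rewrite /dotv (bigD1 i0) //= big1 ?addr0.
  by rewrite !mxE eqxx mulr1.
by move=> j /negbTE hj; rewrite !mxE hj mulr0.
Qed.

Lemma unit_decomp b : dotv b b <= 1 -> exists e (s : R),
  dotv e e = 1 /\ 0 <= s <= 1 /\ b = s *: e.
Proof.
move=> hb.
have [b0|bn0] := eqVneq (en b) 0.
  exists e0, 0; split; first exact: e0_unit.
  split; first by rewrite lexx ler01.
  rewrite scale0r.
  have : dotv b b = 0 by rewrite -en_sq b0 expr2 mulr0.
  move=> h; apply/rowP => j; rewrite mxE.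
  have := coord_sq_le b j; rewrite h => hj.
  have := sqr_ge0 (b ord0 j) => hj'.
  by apply/eqP; rewrite -sqrf_eq0 eq_le hj hj'.
have enp : 0 < en b by rewrite lt_def bn0 en_ge0.
exists ((en b)^-1 *: b), (en b); split.
  rewrite dotvZl dotvZr -en_sq; field; by rewrite bn0.
split.
  rewrite en_ge0 /=; apply: sq_le => //; first exact: en_ge0.
  by rewrite en_sq expr1n.
by rewrite scalerA mulfV // scale1r.
Qed.

Lemma K3 (V : set vec) b g (t : R) : dotv b b <= 1 -> (@sphere1 R d `|` V) g ->
  0 <= t <= 1 -> cap_body V ((1 - t) *: b + t *: g).
Proof.
move=> hb hg /andP[t0 t1].
have [e [s [he [/andP[s0 s1] ->]]]] := unit_decomp hb.
exists 3, (fun i : 'I_3 => nth 0 [:: (1 - t) * (1 + s) / 2; (1 - t) * (1 - s) / 2; t] i),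
  (fun i : 'I_3 => nth 0 [:: e; - e; g] i).
split.
  case=> [[|[|[|i]]] hi] //=; nra.
split.
  by rewrite !big_ord_recl big_ord0 /=; field.
split.
  case=> [[|[|[|i]]] hi] //=.
  - by left; rewrite /sphere1 /=.
  - by left; rewrite /sphere1 /= dotvNl dotvNr opprK.
rewrite !big_ord_recl big_ord0 /=.
by veq; field.
Qed.

Lemma Kball (V : set vec) b : dotv b b <= 1 -> cap_body V b.
Proof.
move=> hb.
have := @K3 V b e0 0 hb (or_introl e0_unit).
rewrite subr0 scale1r scale0r addr0; apply.
by rewrite lexx ler01.
Qed.

Lemma Kgen (V : set vec) g : (@sphere1 R d `|` V) g -> cap_body V g.
Proof.
move=> hg.
have h0 : dotv (0 : vec) 0 <= 1 by rewrite dotv0l.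
have := @K3 V 0 g 1 h0 hg.
rewrite subrr scale0r add0r scale1r; apply.
by rewrite lexx ler01.
Qed.

Lemma supp_bound (V : set vec) z (c : R) :
  (forall g, (@sphere1 R d `|` V) g -> dotv g z <= c) ->
  forall x, cap_body V x -> dotv x z <= c.
Proof.
move=> hg x [n [w [p [hw [hs [hp ->]]]]]].
rewrite dotv_suml.
have -> : c = \sum_(i < n) w i * c by rewrite -mulr_suml hs mul1r.
apply: ler_sum => i _; rewrite dotvZl.
by apply: ler_wpM2l => //; apply: hg.
Qed.

Lemma interior_strict (A : set vec) q z (c : R) :
  interior A q -> (forall y, A y -> dotv y z <= c) -> 0 < dotv z z ->
  dotv q z < c.
Proof.
move=> /interior_en_inv [e e0 he] hA hz.
have ez : 0 <= en z := en_ge0 z.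
set eps := e / (2 * (en z + 1)).
have eps0 : 0 < eps by apply: divr_gt0 => //; lra.
have hin : en (q + eps *: z - q) < e.
  rewrite addrC addKr enZ gtr0_norm //.
  rewrite /eps.
  have h2 : e / (2 * (en z + 1)) * en z = e * (en z / (2 * (en z + 1))) by rewrite mulrAC mulrA.
  rewrite h2.
  have h3 : en z / (2 * (en z + 1)) < 1 by rewrite ltr_pdivrMr; lra.
  by rewrite -[X in _ < X]mulr1 ltr_pM2l.
have := hA _ (he _ hin).
rewrite dotvDl dotvZl => h.
have : 0 < eps * dotv z z by apply: mulr_gt0.
lra.
Qed.

Lemma int_crit (V : set vec) b g (t : R) : dotv b b < 1 -> 0 <= t < 1 ->
  ((@sphere1 R d `|` V) g \/ dotv g g <= 1) ->
  interior (cap_body V) ((1 - t) *: b + t *: g).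
Proof.
move=> hb /andP[t0 t1] hg.
have enb : en b < 1.
  apply: sq_lt; [exact: en_ge0|exact: ler01|]. by rewrite en_sq expr1n.
apply: interior_en.
exists ((1 - t) * (1 - en b)); first by apply: mulr_gt0; lra.
move=> y hy.
set b' := b + (1 - t)^-1 *: (y - ((1 - t) *: b + t *: g)).
have -> : y = (1 - t) *: b' + t *: g.
  rewrite /b'; veq; field; lra.
have hb' : dotv b' b' <= 1.
  have h1 : en b' < 1.
    apply: le_lt_trans (en_triangle _ _) _.
    rewrite enZ ger0_norm; last by rewrite invr_ge0; lra.
    have h2 : (1 - t)^-1 * en (y - ((1 - t) *: b + t *: g)) < 1 - en b.
      by rewrite mulrC ltr_pdivrMr; lra.
    lra.
  rewrite -en_sq; have := en_ge0 b'; nra.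
case: hg => hg.
  by apply: K3 => //; apply/andP; split; lra.
apply: Kball; apply: ball_convex => //; apply/andP; split; lra.
Qed.

End Kmem.
Section Caps.
Variables (R : realType) (d : nat).
Notation vec := 'rV[R]_d.
Implicit Types x y z b g u v : vec.

Lemma Cpts u v : dotv u u = 1 -> 1 < dotv v v -> dotv v u < 0 ->
  (forall x0, dotv x0 x0 = 1 -> dotv x0 v = 1 -> dotv x0 u < 0) ->
  dotv v v - 1 < dotv v u ^+ 2.
Proof.
move=> hu hn hc hx.
set n := dotv v v in hn *; set c := dotv v u in hc *.
have [hlt|hge] := ltrP (c ^+ 2) n; last by lra.
have n0 : n != 0 by apply/eqP; lra.
have m0 : 0 < n - c ^+ 2 by lra.
set b := Num.sqrt ((n - 1) / (n - c ^+ 2)).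
have b0 : 0 <= b := sqrtr_ge0 _.
have hb2 : b ^+ 2 * (n - c ^+ 2) = n - 1.
  rewrite sqr_sqrtr; last by apply: divr_ge0; lra.
  by rewrite mulfVK //; apply/eqP; lra.
set a := (1 - b * c) / n.
set x0 := a *: v + b *: u.
have e1 : dotv x0 x0 = 1.
  rewrite /x0 !(dotvDl, dotvDr, dotvZl, dotvZr) hu ?(dotvC u v) -/n -/c.
  have -> : a * (a * n) + a * (b * c) + (b * (a * c) + b * (b * 1)) =
     1 + (b ^+ 2 * (n - c ^+ 2) - (n - 1)) / n by rewrite /a; field.
  by rewrite hb2 subrr mul0r addr0.
have e2 : dotv x0 v = 1.
  rewrite /x0 !(dotvDl, dotvZl) ?(dotvC u v) -/n -/c /a; field.
  by [].
have := hx x0 e1 e2.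
rewrite /x0 !(dotvDl, dotvZl) hu -/c.
have -> : a * c + b * 1 = (c + b * (n - c ^+ 2)) / n by rewrite /a; field.
rewrite pmulr_llt0; last by rewrite invr_gt0; lra.
move=> h.
have h1 : 0 <= b * (n - c ^+ 2) by apply: mulr_ge0 => //; lra.
have h2 : (b * (n - c ^+ 2)) ^+ 2 < c ^+ 2 by nra.
have h3 : (b * (n - c ^+ 2)) ^+ 2 = (n - 1) * (n - c ^+ 2).
  by rewrite exprMn -hb2; ring.
rewrite h3 in h2.
nra.
Qed.

Lemma cap_ok u v x : dotv u u = 1 -> 1 < dotv v v -> dotv v u < 0 ->
  dotv v v - 1 < dotv v u ^+ 2 -> dotv x x = 1 -> 1 <= dotv x v -> dotv x u < 0.
Proof.
move=> hu hn hc hc2 hx ha.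
set n := dotv v v in hn hc2 *; set c := dotv v u in hc hc2 *.
set a := dotv x v in ha *.
have n0 : n != 0 by apply/eqP; lra.
set y := x - (a / n) *: v; set w := u - (c / n) *: v.
have hY : dotv y y = 1 - a ^+ 2 / n.
  rewrite /y !(dotvBl, dotvBr, dotvZl, dotvZr) hx ?(dotvC v x) -/a -/n; field.
  by [].
have hW : dotv w w = 1 - c ^+ 2 / n.
  rewrite /w !(dotvBl, dotvBr, dotvZl, dotvZr) hu ?(dotvC u v) -/c -/n; field.
  by [].
have hP : dotv x u = a * c / n + dotv y w.
  rewrite /y /w !(dotvBl, dotvBr, dotvZl, dotvZr) ?(dotvC u v) -/c -/n -/a.
  field. by [].
have hcs := CS y w. rewrite hY hW in hcs.
have Y0 := dotv_ge0 y. have W0 := dotv_ge0 w. rewrite hY in Y0. rewrite hW in W0.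
rewrite hP.
set P := dotv y w in hcs *.
have ac : a * c / n < 0.
  rewrite pmulr_llt0; last by rewrite invr_gt0; lra.
  nra.
have [P0|P0] := lerP P 0; first by lra.
suff : P ^+ 2 < (a * c / n) ^+ 2 by nra.
apply: le_lt_trans hcs _.
have -> : (1 - a ^+ 2 / n) * (1 - c ^+ 2 / n) = (n - a ^+ 2) * (n - c ^+ 2) / n ^+ 2.
  by field.
have -> : (a * c / n) ^+ 2 = (a ^+ 2 * c ^+ 2) / n ^+ 2 by field.
rewrite ltr_pM2r; last by rewrite invr_gt0; apply: exprn_gt0; lra.
have ha2 : 1 <= a ^+ 2 by nra.
have h4 : n - a ^+ 2 - c ^+ 2 < 0 by lra.
have h5 : n * (n - a ^+ 2 - c ^+ 2) < 0 by rewrite pmulr_rlt0 //; lra.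
nra.
Qed.

Lemma vertex_in u v : dotv u u = 1 -> 1 < dotv v v -> cap v `<=` Hem (- u) ->
  dotv v u < 0 /\ dotv v v - 1 < dotv v u ^+ 2.
Proof.
move=> hu hn hcap.
set n := dotv v v in hn *.
have sn : 0 < Num.sqrt n by rewrite sqrtr_gt0; lra.
have sn2 : Num.sqrt n ^+ 2 = n by rewrite sqr_sqrtr //; lra.
set s := Num.sqrt n in sn sn2 *.
have hc : dotv v u < 0.
  have := hcap (s^-1 *: v).
  rewrite /cap /Hem /sphere1 /= !(dotvZl, dotvZr, dotvNr) -/n.
  have e1 : s^-1 * (s^-1 * n) = 1.
    by rewrite -sn2; field; rewrite gt_eqF.
  have e2 : 1 <= s^-1 * n.
    rewrite -[X in _ <= _ * X]sn2 expr2 mulKf ?gt_eqF //.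
    apply: sq_le; [exact: ler01|exact: ltW|]. rewrite sn2 expr1n; lra.
  move=> /(_ (conj e1 e2)) [_].
  rewrite oppr_gt0 pmulr_rlt0 //; by rewrite invr_gt0.
split => //; apply: Cpts => // x0 h1 h2.
have := hcap x0; rewrite /cap /Hem /sphere1 /= h2 h1 lexx dotvNr oppr_gt0.
by move=> /(_ (conj erefl isT)) [].
Qed.

End Caps.
Section Clo.
Variables (R : realType) (d : nat).
Notation vec := 'rV[R]_d.
Implicit Types x y z b g u v : vec.

Lemma ball1_closed : closed (@ball1 R d).
Proof.
move=> p hp; rewrite /ball1 /=.
rewrite leNgt; apply/negP => h1.
have enp : 1 < en p.
  apply: sq_lt; [exact: ler01|exact: en_ge0|]. by rewrite en_sq expr1n.
have e0 : 0 < en p - 1 by lra.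
have [y [hy hyp]] := closure_en hp e0.
have eny : en y <= 1.
  apply: sq_le; [exact: en_ge0|exact: ler01|]. by rewrite en_sq expr1n.
have := en_triangle y (p - y); rewrite addrC subrK en_sym.
lra.
Qed.

Lemma ball1_bounded : bounded_set (@ball1 R d).
Proof.
rewrite /bounded_set /=.
exists 1; split => // M M1 x hx.
rewrite /=; apply: le_trans (norm_le_en _) _.
have : en x <= 1.
  apply: sq_le; [exact: en_ge0|exact: ler01|]. by rewrite en_sq expr1n.
lra.
Qed.

Lemma Cv_closed v : closed (Cv v).
Proof.
have -> : Cv v = (fun z : vec * R => (1 - z.2) *: z.1 + z.2 *: v) @`
    (@ball1 R d `*` `[0, 1]%classic).
  apply/seteqP; split => y.
    by move=> [b [t [hb [ht ->]]]]; exists (b, t) => //; split => //=.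
  by move=> [[b t] [hb ht] <-]; exists b, t; split => //; split => //.
apply: compact_closed; first exact: norm_hausdorff.
apply: (@continuous_compact _ _ (fun z : vec * R => (1 - z.2) *: z.1 + z.2 *: v)
  (@ball1 R d `*` `[0, 1]%classic)); last first.
  apply: compact_setX; last exact: segment_compact.
  exact: bounded_closed_compact ball1_bounded ball1_closed.
apply: continuous_subspaceT => z.
apply: cvgD.
  apply: cvgZ; last exact: cvg_fst.
  apply: cvgB; first exact: cvg_cst.
  exact: cvg_snd.
apply: cvgZ; first exact: cvg_snd.
exact: cvg_cst.
Qed.
End Clo.
Section Fin.
Variables (R : realType) (d : nat) (V : set 'rV[R]_d).
Hypothesis hV : cap_body_points V.
Notation vec := 'rV[R]_d.
Implicit Types x y z b g u v w : vec.

Lemma en_le1 x : dotv x x <= 1 -> en x <= 1.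
Proof.
move=> h; apply: sq_le; [exact: en_ge0|exact: ler01|]. by rewrite en_sq expr1n.
Qed.

Lemma far_pair v w : V v -> V w -> v <> w -> 3 <= en v -> 3 <= en w ->
  2 * dotv v w < - (en v * en w).
Proof.
move=> Vv Vw vw hv hw.
have [tau [b0 [/andP[t0 t1] [hb0 eb0]]]] := seg_dec hV Vv Vw vw.
rewrite eb0 !(dotvDl, dotvDr, dotvZl, dotvZr) (dotvC w v) -!en_sq in hb0.
clear eb0.
rewrite ltNge; apply/negP => h.
set A := en v in hv hb0 h *; set C := en w in hw hb0 h *.
set X := (1 - tau) * A; set Y := tau * C.
have hXY : 3 <= X + Y by rewrite /X /Y; nra.
have h1 : 0 <= tau * (1 - tau) * (2 * dotv v w + A * C) by apply: mulr_ge0; nra.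
have h2 : X ^+ 2 - X * Y + Y ^+ 2 <= 1.
  rewrite /X /Y; nra.
have h3 : 9 <= (X + Y) ^+ 2 by nra.
have h4 : 0 <= (X - Y) ^+ 2 by apply: sqr_ge0.
clear vw; nra.
Qed.

Lemma no_triple v1 v2 v3 : V v1 -> V v2 -> V v3 -> v1 <> v2 -> v1 <> v3 -> v2 <> v3 ->
  3 <= en v1 -> 3 <= en v2 -> 3 <= en v3 -> False.
Proof.
move=> V1 V2 V3 n12 n13 n23 h1 h2 h3.
have p12 := far_pair V1 V2 n12 h1 h2.
have p13 := far_pair V1 V3 n13 h1 h3.
have p23 := far_pair V2 V3 n23 h2 h3.
pose e1 := (en v1)^-1 *: v1; pose e2 := (en v2)^-1 *: v2; pose e3 := (en v3)^-1 *: v3.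
have u1 : dotv e1 e1 = 1.
  by rewrite /e1 dotvZl dotvZr -en_sq; field; apply/eqP; lra.
have u2 : dotv e2 e2 = 1.
  by rewrite /e2 dotvZl dotvZr -en_sq; field; apply/eqP; lra.
have u3 : dotv e3 e3 = 1.
  by rewrite /e3 dotvZl dotvZr -en_sq; field; apply/eqP; lra.
have cr (a b : vec) : 3 <= en a -> 3 <= en b -> 2 * dotv a b < - (en a * en b) ->
    2 * dotv ((en a)^-1 *: a) ((en b)^-1 *: b) < -1.
  move=> ha hb hab; rewrite dotvZl dotvZr.
  have -> : 2 * ((en a)^-1 * ((en b)^-1 * dotv a b)) = (2 * dotv a b) / (en a * en b).
    by field; apply/andP; split; apply/eqP; lra.
  rewrite ltr_pdivrMr; last by nra.
  lra.
have c12 := cr _ _ h1 h2 p12.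
have c13 := cr _ _ h1 h3 p13.
have c23 := cr _ _ h2 h3 p23.
rewrite -/e1 -/e2 -/e3 in c12 c13 c23.
have := dotv_ge0 (e1 + e2 + e3).
rewrite !(dotvDl, dotvDr) u1 u2 u3 (dotvC e2 e1) (dotvC e3 e1) (dotvC e3 e2).
lra.
Qed.

Lemma V_bounded : exists M, forall v, V v -> en v <= M.
Proof.
have [[v1 [V1 h1]]|n1] := pselect (exists v1, V v1 /\ 3 < en v1); last first.
  exists 3 => v Vv; rewrite leNgt; apply/negP => h; apply: n1; by exists v.
have [[v2 [V2 [n12 h2]]]|n2] := pselect (exists v2, V v2 /\ v2 <> v1 /\ 3 < en v2); last first.
  exists (3 + en v1) => v Vv.
  have [->|nv] := eqVneq v v1; first by lra.
  have : en v <= 3.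
    rewrite leNgt; apply/negP => h; apply: n2; exists v; split => //; split => //.
    exact/eqP.
  have := en_ge0 v1; lra.
exists (3 + en v1 + en v2) => v Vv.
have [->|nv1] := eqVneq v v1; first by have := en_ge0 v2; lra.
have [->|nv2] := eqVneq v v2; first by have := en_ge0 v1; lra.
have : en v <= 3.
  rewrite leNgt; apply/negP => h.
  apply: (no_triple V1 V2 Vv).
  - by move=> e; apply: n12.
  - by move=> e; move: nv1; rewrite e eqxx.
  - by move=> e; move: nv2; rewrite e eqxx.
  - exact: ltW.
  - exact: ltW.
  - exact: ltW.
have := en_ge0 v1; have := en_ge0 v2; lra.
Qed.

Lemma separation v w (de : R) : V v -> V w -> v <> w -> 0 < de -> 1 + de <= en v ->
  de <= en (v - w).
Proof.
move=> Vv Vw vw de0 hv.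
have [tau [b0 [/andP[t0 t1] [hb0 eb0]]]] := seg_dec hV Vv Vw vw.
have e1 : v - b0 = tau *: (v - w) by rewrite eb0; veq; ring.
have := en_triangle (v - b0) b0; rewrite subrK e1 enZ ger0_norm; last lra.
have := en_le1 hb0.
have := en_ge0 (v - w).
nra.
Qed.

Lemma subsing_finite (T : Type) (A : set T) : (forall a1 a2 : T, A a1 -> A a2 -> a1 = a2) ->
  finite_set A.
Proof.
move=> h; have [[a Aa]|na] := pselect (exists a, A a).
  apply: (sub_finite_set (B := [set a])); last exact: finite_set1.
  by move=> c Ac; rewrite /= (h _ _ Ac Aa).
apply: (sub_finite_set (B := set0)); last exact: finite_set0.
by move=> c Ac; apply: na; exists c.
Qed.

Lemma Vd_finite (de : R) : 0 < de -> finite_set [set v | V v /\ 1 + de <= en v].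
Proof.
move=> de0.
have [M hM] := V_bounded.
set Vd := [set v | V v /\ 1 + de <= en v].
pose box := [set x : vec | forall i, `[- M, M]%classic (x ord0 i)].
have hbox : compact box.
  by apply: (@rV_compact _ _ (fun _ => `[- M, M]%classic)) => i; exact: segment_compact.
have d0 : 0 <= d%:R :> R by [].
set c := de / (2 * (d%:R + 1)).
have c0 : 0 < c by apply: divr_gt0 => //; lra.
move: hbox; rewrite compact_cover => /(_ vec box (fun x => ball x c)).
case.
- by move=> i _; exact: ball_open.
- by move=> x bx; exists x => //; exact: ballxx.
move=> D' _ hcov.
have hsub : Vd `<=` \bigcup_(x in [set` D'] : set vec) (ball x c `&` Vd).
  move=> v [Vv hv].
  have vb : box v.
    move=> i; rewrite /= in_itv /= -ler_norml.
    apply: le_trans (coord_le_norm _ _) _.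
    apply: le_trans (norm_le_en _) _.
    exact: hM.
  have [x Dx bx] := hcov v vb.
  by exists x => //; split.
apply: (sub_finite_set hsub).
apply: bigcup_finite; first exact: finite_fset.
move=> x _; apply: subsing_finite => v w [bv [Vv hv]] [bw [Vw hw]].
have [//|/eqP vw] := eqVneq v w; exfalso.
have := separation Vv Vw vw de0 hv.
move: bv bw; rewrite -!ball_normE /ball_ /= => bv bw.
have hvw : `|v - w| < 2 * c.
  have -> : v - w = (x - w) - (x - v) by veq; ring.
  apply: le_lt_trans (ler_normB _ _) _; lra.
have := dot_le_norm (v - w).
rewrite -en_sq => hle.
have hn := normr_ge0 (v - w).
have h2c : `|v - w| ^+ 2 <= (2 * c) ^+ 2 by apply: lerXn2r; rewrite ?nnegrE //; lra.
have : d%:R * (2 * c) ^+ 2 < de ^+ 2.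
  rewrite /c.
  have -> : d%:R * (2 * (de / (2 * (d%:R + 1)))) ^+ 2 = de ^+ 2 * (d%:R / (d%:R + 1) ^+ 2).
    by field; apply/eqP; lra.
  rewrite -[X in _ < X]mulr1 ltr_pM2l; last by apply: exprn_gt0.
  rewrite ltr_pdivrMr; last by apply: exprn_gt0; lra.
  nra.
have := en_ge0 (v - w).
nra.
Qed.

End Fin.
Section Main.
Variables (R : realType) (d : nat) (V : set 'rV[R]_d).
Hypothesis hV : cap_body_points V.
Notation vec := 'rV[R]_d.
Implicit Types x y z b g u v w : vec.

Lemma hout v : V v -> 1 < dotv v v.
Proof.
move=> Vv; have := hV.2.1 v Vv; rewrite /ball1 /= => h.
by rewrite ltNge; apply/negP.
Qed.

Lemma closure_C p : closure (cap_body V) p -> 1 < dotv p p ->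
  exists2 v, V v & Cv v p.
Proof.
move=> hp hp1.
have enp : 1 < en p.
  apply: sq_lt; [exact: ler01|exact: en_ge0|]. by rewrite en_sq expr1n.
set de := (en p - 1) / 2.
have de0 : 0 < de by rewrite /de; lra.
have hde : en p = 1 + 2 * de by rewrite /de; field.
set Vd := [set v | V v /\ 1 + de <= en v].
set U := \bigcup_(v in Vd) Cv v.
have cU : closed U.
  apply: closed_bigcup; first exact: Vd_finite.
  by move=> v _; exact: Cv_closed.
have : closure U p.
  move=> B hB.
  have [y [Ky [By hy]]] := hp _ (filterI hB (nbhs_en p de0)).
  exists y; split => //.
  have eny : 1 + de < en y.
    have := en_triangle y (p - y); rewrite addrC subrK en_sym.
    rewrite /= in hy; move=> h; lra.
  case: (conv_sub hV Ky) => [hb|[v Vv [b [t [hb [/andP[t0 t1] ey]]]]]].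
    have := @en_le1 _ _ y hb; lra.
  rewrite /U /=; exists v; last by exists b, t; split => //; split => //; apply/andP.
  split => //.
  rewrite leNgt; apply/negP => hv.
  have : en y <= 1 + de.
    rewrite ey; apply: le_trans (en_triangle _ _) _.
    rewrite !enZ !ger0_norm; [|lra|lra].
    have := en_le1 hb; have := en_ge0 b; nra.
  lra.
move=> /cU [v [Vv _] hv]; by exists v.
Qed.

Lemma illum_dir (K : set vec) p w z (lam : R) : interior K (p + lam *: w) -> 0 < lam ->
  (forall y, K y -> dotv y z <= dotv p z) -> 0 < dotv z z -> dotv w z < 0.
Proof.
move=> hi l0 hK hz.
have := interior_strict hi hK hz.
rewrite dotvDl dotvZl => h.
have : lam * dotv w z < 0 by lra.
by rewrite pmulr_rlt0.
Qed.

Lemma not_int (K : set vec) p z : (forall y, K y -> dotv y z <= dotv p z) ->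
  0 < dotv z z -> ~ interior K p.
Proof. move=> hK hz hi; have := interior_strict hi hK hz; lra. Qed.

Lemma tangent_supp v x0 : V v -> dotv x0 x0 = 1 -> dotv x0 v = 1 ->
  forall y, cap_body V y -> dotv y x0 <= 1.
Proof.
move=> Vv hx0 hxv; apply: supp_bound => g [hg|Vg].
  have := dot_le_en g x0.
  rewrite /sphere1 /= in hg.
  have e1 : en g = 1 by rewrite /en hg sqrtr1.
  have e2 : en x0 = 1 by rewrite /en hx0 sqrtr1.
  by rewrite e1 e2 mulr1.
have [->|gv] := eqVneq g v; first by rewrite dotvC hxv.
rewrite leNgt; apply/negP => h.
have [tau [b0 [/andP[t0 t1] [hb0 eb0]]]] := seg_dec hV Vv Vg (nesym (elimN eqP gv)).
have e2 : en x0 = 1 by rewrite /en hx0 sqrtr1.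
have hd : dotv b0 x0 = (1 - tau) + tau * dotv g x0.
  by rewrite eb0 dotvDl !dotvZl (dotvC v x0) hxv mulr1.
have := dot_le_en b0 x0; rewrite e2 mulr1 hd.
have := en_le1 hb0.
clear eb0 gv; nra.
Qed.

Lemma vertex_supp v : V v -> forall y, cap_body V y -> dotv y v <= dotv v v.
Proof.
move=> Vv; have hn := hout Vv.
have env : 1 < en v.
  apply: sq_lt; [exact: ler01|exact: en_ge0|]. by rewrite en_sq expr1n.
have envn : en v <= dotv v v by rewrite -en_sq expr2; nra.
apply: supp_bound => g [hg|Vg].
  have := dot_le_en g v.
  rewrite /sphere1 /= in hg.
  have e1 : en g = 1 by rewrite /en hg sqrtr1.
  rewrite e1 mul1r; lra.
have [->|gv] := eqVneq g v; first by [].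
rewrite leNgt; apply/negP => h.
have [tau [b0 [/andP[t0 t1] [hb0 eb0]]]] := seg_dec hV Vv Vg (nesym (elimN eqP gv)).
have hd : dotv b0 v = (1 - tau) * dotv v v + tau * dotv g v.
  by rewrite eb0 dotvDl !dotvZl.
have := dot_le_en b0 v; rewrite hd.
have := en_le1 hb0. have := en_ge0 b0.
clear eb0 gv; nra.
Qed.

End Main.
Theorem theorem1 (R : realType) (d : nat) (hd : (2 <= d)%N)
  (V : set 'rV[R]_d) (hV : cap_body_points V)
  (k : nat) (u : 'I_k -> 'rV[R]_d) (hu : forall j, sphere1 (u j)) :
  completely_illuminated (cap_body V) u <->
  ((forall v, V v -> exists j, cap v `<=` Hem (- u j)) /\
   \bigcup_(j in [set: 'I_k]) Hem (- u j) = @sphere1 R d).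
Proof.
have d0 : (0 < d)%N by apply: leq_trans hd.
pose i0 : 'I_d := Ordinal d0.
have hu1 : forall j, dotv (u j) (u j) = 1 by move=> j; have := hu j.
split.
- move=> hill; split.
  + move=> v Vv.
    have hn := hout hV Vv.
    have hvs := vertex_supp hV Vv.
    have vz : 0 < dotv v v by lra.
    have bd : bdry (cap_body V) v.
      rewrite /bdry /setD /=; split; first by apply: subset_closure; exact: (@Kgen R d i0 V v (or_intror Vv)).
      exact: not_int hvs vz.
    have [j [lam l0 hint]] := hill v bd.
    exists j.
    have H1 : dotv v (u j) < 0.
      by rewrite dotvC; apply: (illum_dir hint l0 hvs vz).
    have H2 := (@Cpts R d (u j) v (hu1 j) hn H1).
    have H3 : dotv v v - 1 < dotv v (u j) ^+ 2.
      apply: H2 => x0 hx0 hxv.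
      rewrite dotvC; apply: (illum_dir hint l0) (_ : 0 < dotv x0 x0); last by rewrite hx0 ltr01.
      move=> y Ky; rewrite (dotvC v x0) hxv.
      exact: (tangent_supp hV Vv hx0 hxv).
    move=> x [hx1 hx2].
    split => //; rewrite dotvNr oppr_gt0.
    exact: (cap_ok (hu1 j) hn H1 H3 hx1 hx2).
  + apply/seteqP; split; first by move=> x [j _ [hx _]].
    move=> x hx; rewrite /sphere1 /= in hx.
    apply: contrapT => hno.
    have hj : forall j, 0 <= dotv (u j) x.
      move=> j; rewrite leNgt; apply/negP => h; apply: hno; exists j => //.
      by split => //; rewrite dotvNr oppr_gt0 dotvC.
    have xz : 0 < dotv x x by rewrite hx ltr01.
    have [p [Kp hsupp]] : exists p, cap_body V p /\
        forall y, cap_body V y -> dotv y x <= dotv p x.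
      have [[v [Vv hv]]|nv] := pselect (exists v, V v /\ 1 < dotv v x).
        exists v; split; first exact: (@Kgen R d i0 V v (or_intror Vv)).
        apply: supp_bound => g [hg|Vg].
          have := dot_le_en g x.
          rewrite /sphere1 /= in hg.
          have e1 : en g = 1 by rewrite /en hg sqrtr1.
          have e2 : en x = 1 by rewrite /en hx sqrtr1.
          rewrite e1 e2 mulr1; lra.
        rewrite leNgt; apply/negP => h.
        have gv : g != v by apply/eqP => e; rewrite e in h; lra.
        have [tau [b0 [/andP[t0 t1] [hb0 eb0]]]] := seg_dec hV Vv Vg (nesym (elimN eqP gv)).
        have e2 : en x = 1 by rewrite /en hx sqrtr1.
        have hdd : dotv b0 x = (1 - tau) * dotv v x + tau * dotv g x.
          by rewrite eb0 dotvDl !dotvZl.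
        have := dot_le_en b0 x; rewrite e2 mulr1 hdd.
        have := en_le1 hb0.
        clear eb0 gv; nra.
      exists x; split; first exact: (@Kgen R d i0 V x (or_introl hx)).
      apply: supp_bound => g [hg|Vg].
        have := dot_le_en g x.
        rewrite /sphere1 /= in hg.
        have e1 : en g = 1 by rewrite /en hg sqrtr1.
        have e2 : en x = 1 by rewrite /en hx sqrtr1.
        by rewrite e1 e2 mulr1 hx.
      rewrite hx leNgt; apply/negP => h; apply: nv; by exists g.
    have bd : bdry (cap_body V) p.
      rewrite /bdry /setD /=; split; first exact: subset_closure.
      exact: not_int hsupp xz.
    have [j [lam l0 hint]] := hill p bd.
    have := illum_dir hint l0 hsupp xz.
    have := hj j; lra.
- move=> [hi hii] p [hcl hnint].
  have [hp1|hp1] := ltrP 1 (dotv p p).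
  + have [v Vv [b [t [hb [/andP[t0 t1] ep]]]]] := closure_C hV hcl hp1.
    have [j hj] := hi v Vv.
    have hn := hout hV Vv.
    have [H1 H2] := vertex_in (hu1 j) hn hj.
    set c := dotv v (u j) in H1 H2.
    have tp : 0 < t.
      rewrite lt_def t0 andbT; apply/eqP => e.
      move: hp1; rewrite ep e subr0 scale1r scale0r addr0; lra.
    exists j, (t * (- c)); first by apply: mulr_gt0; lra.
    set b' := v + (- c) *: u j.
    have hb' : dotv b' b' < 1.
      rewrite /b' !(dotvDl, dotvDr, dotvZl, dotvZr) hu1 (dotvC (u j) v) -/c; lra.
    have -> : p + (t * - c) *: u j = (1 - (1 - t)) *: b' + (1 - t) *: b.
      by rewrite ep /b'; veq; ring.
    apply: (int_crit i0) => //.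
      by apply/andP; split; lra.
    by right.
  + have [hp2|hp2] := ltrP (dotv p p) 1.
      exfalso; apply: hnint.
      have := @int_crit R d i0 V p p 0 hp2.
      rewrite subr0 scale1r scale0r addr0; apply.
        by rewrite lexx ltr01.
      by right; apply: ltW.
    have hps : sphere1 p by rewrite /sphere1 /=; apply/eqP; rewrite eq_le hp1 hp2.
    rewrite -hii in hps.
    case: hps => j _ [_ hj].
    rewrite dotvNr oppr_gt0 in hj.
    set c := dotv p (u j) in hj.
    exists j, (- c); first lra.
    have hb : dotv (p + (- c) *: u j) (p + (- c) *: u j) < 1.
      rewrite !(dotvDl, dotvDr, dotvZl, dotvZr) hu1 (dotvC (u j) p) -/c.
      have e : dotv p p = 1 by apply/eqP; rewrite eq_le hp1 hp2.
      rewrite e; nra.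
    have := @int_crit R d i0 V _ (p + (- c) *: u j) 0 hb.
    rewrite subr0 scale1r scale0r addr0; apply.
      by rewrite lexx ltr01.
    by right; apply: ltW.
Qed.
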